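(* Let $a_1,\ldots,a_k\in[n]$, $N=a_1+\cdots+a_k$, let $j\in[\max(a_1,\ldots,a_k),\min(N,n)]$ and let $t$ be any term of $B_j$. Let $D_{j,t}$ be the set of $k$-tuples $(\sigma_1,\ldots,\sigma_k)$, with $\sigma_i$ a term of $B_{a_i}$, such that the set of cards hit by the tuple is exactly $\{1,\ldots,j\}$ and $\sigma_1\sigma_2\cdots\sigma_k=t$ in $S_n$. Define $\phi_j(\sigma_1,\ldots,\sigma_k)=\{\alpha_1,\ldots,\alpha_j\}$ where $\alpha_c=\{l\in[N]:\text{the $l$-th hitter hits card } c\}$. Then $\phi_j$ is a well-defined bijection from $D_{j,t}$ onto $Q_j^{a_1,\ldots,a_k}$.
   Context: Elements of $S_n$ are written in deck notation: a word $c_1c_2\cdots c_n$ (a rearrangement of $1,\ldots,n$) is the deck in which card $c_i$ lies in position $i$; the identity is $12\cdots n$. Multiplication: for $\sigma=c_1\cdots c_n$ and $\tau=d_1\cdots d_n$, $\sigma\tau=c_{d_1}c_{d_2}\cdots c_{d_n}$ (first $\sigma$, then $\tau$ is applied to the deck). For $a\in[n]$, a term of $B_a$ is a word $c_1\cdots c_n\in S_n$ in which the letters $a+1,\ldots,n$ appear in increasing order; $B_a\in\mathbb{Q}[S_n]$ is the sum of all terms of $B_a$. Let $A_i=a_1+\cdots+a_i$ ($A_0=0$) and $I_i=\{A_{i-1}+1,\ldots,A_i\}$. Hitting: given a tuple $(\sigma_1,\ldots,\sigma_k)$ with $\sigma_i$ a term of $B_{a_i}$, let $d^{(0)}=12\cdots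 n$ and $d^{(i)}=\sigma_1\cdots\sigma_i$ (the deck after $i$ shuffles). For $l=A_{i-1}+m$ with $1\le m\le a_i$, the $l$-th hitter hits the card lying in position $m$ of $d^{(i-1)}$. The cards hit by the tuple are those hit by some hitter. $Q_j^{a_1,\ldots,a_k}$ is the set of all partitions of $[N]$ into exactly $j$ nonempty blocks such that no block contains two distinct elements of the same segment $I_i$. *)

(* Defs.v *)
From mathcomp Require Import all_boot all_order all_fingroup.
Set Implicit Arguments. Unset Strict Implicit. Unset Printing Implicit Defensive.

(* Conventions (0-based encoding): card c (1..n) of the paper is the ordinal
   c-1 : 'I_n, and position p (1..n) is the ordinal p-1 : 'I_n.
   A deck  c_1...c_n  is the permutation s : {perm 'I_n} with s (p-1) = c_p - 1
   (position |-> card).  Hitters l = 1..N are encoded as l-1 : 'I_N. *)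

(* Paper product  sigma tau  (first sigma, then tau):  (sigma tau)(p) = sigma(tau(p)).
   In MathComp (s * t) x = t (s x), hence sigma tau = tau * sigma. *)
Definition deck_mul n (sigma tau : {perm 'I_n}) : {perm 'I_n} := (tau * sigma)%g.

(* sigma is a term of B_a : letters a+1..n appear in increasing order,
   i.e. for cards x < y among a+1..n, position of x < position of y. *)
Definition isB n (a : nat) (sigma : {perm 'I_n}) : bool :=
  [forall x : 'I_n, forall y : 'I_n,
     (a <= x) && (x < y) ==> ((sigma^-1)%g x < (sigma^-1)%g y)].

Definition segA (a : seq nat) (i : nat) : nat := sumn (take i a).

(* 0-based index of the segment I_{i+1} containing the 0-based hitter l *)
Definition seg (a : seq nat) (l : nat) : nat :=
  count (fun i => segA a i.+1 <= l) (iota 0 (size a)).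

(* 0-based position m-1 for hitter l = A_{i-1} + m *)
Definition offset (a : seq nat) (l : nat) : nat := l - segA a (seg a l).

Definition deck_after n (s : seq {perm 'I_n}) (i : nat) : {perm 'I_n} :=
  foldr (@deck_mul n) 1%g (take i s).

Definition hit_card n (a : seq nat) (s : seq {perm 'I_n}) (l : nat) : option 'I_n :=
  omap (fun p : 'I_n => deck_after s (seg a l) p) (insub (offset a l)).

Section Hitting.
Variables (n : nat) (a : seq nat).
Local Notation k := (size a).
Local Notation N := (sumn a).

Definition tuple_seq (s : {ffun 'I_k -> {perm 'I_n}}) : seq {perm 'I_n} := fgraph s.

Definition hits (s : {ffun 'I_k -> {perm 'I_n}}) (l : 'I_N) (c : 'I_n) : bool :=
  hit_card a (tuple_seq s) l == Some c.

Definition cards_hit (s : {ffun 'I_k -> {perm 'I_n}}) : {set 'I_n} :=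
  [set c | [exists l : 'I_N, hits s l c]].

Definition alpha (s : {ffun 'I_k -> {perm 'I_n}}) (c : 'I_n) : {set 'I_N} :=
  [set l | hits s l c].

Definition Dset (j : nat) (t : {perm 'I_n}) : {set {ffun 'I_k -> {perm 'I_n}}} :=
  [set s : {ffun 'I_k -> {perm 'I_n}} | [&& [forall i : 'I_k, isB (nth 0 a i) (s i)],
              cards_hit s == [set c : 'I_n | c < j] &
              deck_after (tuple_seq s) k == t]].

Definition phi (j : nat) (s : {ffun 'I_k -> {perm 'I_n}}) : {set {set 'I_N}} :=
  [set alpha s c | c in [set c : 'I_n | c < j]].

Definition Qset (j : nat) : {set {set {set 'I_N}}} :=
  [set P : {set {set 'I_N}} |
     [&& partition P [set: 'I_N], #|P| == j &
         [forall B in P, forall x in B, forall y in B,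
            (seg a x == seg a y) ==> (x == y)]]].

End Hitting.

Arguments phi n a j s : clear implicits.
Arguments Dset n a j t : clear implicits.
Arguments Qset a j : clear implicits.

(* Main.v *)
Require Import Defs.
From mathcomp Require Import all_boot all_order all_fingroup.
From mathcomp Require Import zify.
Set Implicit Arguments. Unset Strict Implicit. Unset Printing Implicit Defensive.

Lemma card_ltn_ord n m : m <= n -> #|[set p : 'I_n | p < m]| = m.
Proof.
elim: m => [|m IH] hm.
  by apply/eqP; rewrite cards_eq0; apply/eqP/setP=> p; rewrite !inE.
have hm' : m < n by [].
rewrite (_ : [set p : 'I_n | p < m.+1] = (Ordinal hm') |: [set p : 'I_n | p < m]).
  by rewrite cardsU1 IH ?(ltnW hm) // inE ltnn /= add1n.
apply/setP=> p; rewrite !inE ltnS leq_eqVlt; congr (_ || _).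
Qed.

Lemma perm_rank n (pi : {perm 'I_n}) c :
  val (pi c) = #|[set c' | pi c' < pi c]|.
Proof.
rewrite -[X in X = _](card_ltn_ord (ltnW (ltn_ord (pi c)))).
rewrite -(card_imset _ (@perm_inj _ pi)).
apply: eq_card => p; rewrite inE.
apply/idP/imsetP=> [h|[x]]; last by rewrite inE => hx ->.
by exists ((pi^-1)%g p); rewrite ?inE permKV.
Qed.

Section Rank.
Variable n : nat.
Implicit Types (pi : {perm 'I_n}) (K : 'I_n -> nat).

Definition ordered pi K := forall c c', (pi c < pi c') = (K c < K c').
Definition rnk K c := locked #|[set c' | K c' < K c]|.

Lemma ordered_rank pi K : ordered pi K -> forall c, val (pi c) = rnk K c.
Proof.
move=> h c; rewrite perm_rank /rnk -lock; apply: eq_card => c'; by rewrite !inE h.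
Qed.

Lemma ordered_uniq pi pi' K : ordered pi K -> ordered pi' K -> pi = pi'.
Proof.
move=> h h'; apply/permP=> c; apply: val_inj; by rewrite (ordered_rank h) (ordered_rank h').
Qed.

Lemma rnk_mono K c c' : K c < K c' -> rnk K c < rnk K c'.
Proof.
move=> h; rewrite /rnk -!lock; apply: proper_card; apply/properP; split.
  by apply/subsetP=> x; rewrite !inE => hx; apply: ltn_trans h.
by exists c; rewrite !inE ?ltnn.
Qed.

Lemma rnk_le K c c' : K c' <= K c -> rnk K c' <= rnk K c.
Proof.
move=> h; rewrite /rnk -!lock; apply: subset_leq_card; apply/subsetP=> x; rewrite !inE => hx.
exact: leq_trans hx h.
Qed.

Lemma rnk_lt K c : rnk K c < n.
Proof.
rewrite /rnk -lock -[X in _ < X](card_ord n) -cardsT; apply: proper_card; apply/properP; split.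
  exact: subsetT.
by exists c; rewrite !inE ?ltnn.
Qed.

Lemma ordered_exists K : injective K -> {q : {perm (ordinal n)} | ordered q K}.
Proof.
move=> hK.
have hord : forall c c', (rnk K c < rnk K c') = (K c < K c').
  move=> c c'; case: (ltnP (K c) (K c')) => h; first exact: rnk_mono.
  by apply/negbTE; rewrite -leqNgt rnk_le.
have inj : injective (fun c => Ordinal (rnk_lt K c)).
  move=> c c' e; have e' := congr1 (@nat_of_ord n) e.
  change (rnk K c = rnk K c') in e'.
  apply: hK; case: (ltngtP (K c) (K c')) => // h.
    by have := rnk_mono h; rewrite e' ltnn.
  by have := rnk_mono h; rewrite e' ltnn.
exists (perm inj) => c c'; by rewrite !permE /= hord.
Qed.

End Rank.

Section First.
Variable N : nat.
Implicit Types (p q : pred nat).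

Definition first p b := b + find (fun x => p (b + x)) (iota 0 (N - b)).

Lemma first_ge p b : b <= first p b.
Proof. exact: leq_addr. Qed.

Lemma first_leN p b : b <= N -> first p b <= N.
Proof.
move=> hb; have := find_size (fun x => p (b + x)) (iota 0 (N - b)).
rewrite size_iota /first; lia.
Qed.

Lemma first_none p b l : b <= l -> l < first p b -> ~~ p l.
Proof.
move=> h1 h2; rewrite -(subnKC h1).
have hx : l - b < find (fun x => p (b + x)) (iota 0 (N - b)).
  by rewrite ltn_subLR // addnC.
have hs : l - b < N - b.
  apply: leq_trans hx _; by rewrite -{2}(size_iota 0 (N - b)) find_size.
have := before_find 0 hx; rewrite nth_iota // add0n => ->; done.
Qed.

Lemma first_hit p b : first p b < N -> p (first p b).
Proof.
rewrite /first => h.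
have hf : find (fun x => p (b + x)) (iota 0 (N - b)) < size (iota 0 (N - b)).
  rewrite size_iota; lia.
have hh : has (fun x => p (b + x)) (iota 0 (N - b)) by rewrite has_find.
have := nth_find 0 hh; rewrite nth_iota ?add0n //; by rewrite size_iota in hf.
Qed.

Lemma first_le p b l : b <= l -> l < N -> p l -> first p b <= l.
Proof.
move=> h1 h2 hp; rewrite leqNgt; apply/negP=> h; by have := first_none h1 h; rewrite hp.
Qed.

Lemma first_eq p b l : b <= l -> l < N -> p l -> (forall l', b <= l' < l -> ~~ p l') ->
  first p b = l.
Proof.
move=> h1 h2 hp hn; apply/eqP; rewrite eqn_leq first_le //=.
rewrite leqNgt; apply/negP=> h.
have hlt : first p b < N by apply: ltn_trans h h2.
have := hn (first p b); rewrite first_ge h (first_hit hlt); by move/(_ isT).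
Qed.

Lemma first_ext p q b : (forall l, b <= l < N -> p l = q l) -> first p b = first q b.
Proof.
move=> h; rewrite /first; congr (_ + _); apply: eq_in_find => x.
rewrite mem_iota add0n => hx; apply: h; rewrite leq_addr /=; lia.
Qed.

Lemma first_shift p b b' : b <= b' -> b' <= N -> (forall l, b <= l < b' -> ~~ p l) ->
  first p b = first p b'.
Proof.
move=> h1 h2 hn.
have hfb' : b' <= first p b.
  rewrite leqNgt; apply/negP=> h.
  have hlt : first p b < N by apply: leq_trans h h2.
  by have := hn (first p b); rewrite first_ge h (first_hit hlt); by move/(_ isT).
apply/eqP; rewrite eqn_leq; apply/andP; split.
  case: (ltnP (first p b') N) => h.
    by apply: first_le (first_hit h) => //; apply: leq_trans h1 (first_ge _ _).
  apply: leq_trans (first_leN _ (leq_trans h1 h2)) h.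
case: (ltnP (first p b) N) => h.
  exact: first_le (first_hit h).
apply: leq_trans (first_leN _ h2) h.
Qed.

End First.


Section Seg.
Variable a : seq nat.
Local Notation k := (size a).
Local Notation N := (sumn a).

Lemma segA0 : segA a 0 = 0. Proof. by rewrite /segA take0. Qed.
Lemma segAk : segA a k = N. Proof. by rewrite /segA take_size. Qed.
Lemma segAS i : i < k -> segA a i.+1 = segA a i + nth 0 a i.
Proof. by move=> h; rewrite /segA (take_nth 0 h) sumn_rcons. Qed.

Lemma segA_le1 i : segA a i <= segA a i.+1.
Proof.
case: (ltnP i k) => h; first by rewrite segAS // leq_addr.
by rewrite /segA !take_oversize // (leq_trans h).
Qed.

Lemma segA_mono i i' : i <= i' -> segA a i <= segA a i'.
Proof.
move=> h; rewrite -(subnKC h); elim: (i' - i) => [|d IH]; first by rewrite addn0.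
by apply: leq_trans IH _; rewrite addnS segA_le1.
Qed.

Lemma segA_leN i : segA a i <= N.
Proof.
case: (ltnP i k) => h; first by rewrite -segAk segA_mono // ltnW.
by rewrite /segA take_oversize.
Qed.

Lemma seg_eq i l : i < k -> segA a i <= l < segA a i.+1 -> seg a l = i.
Proof.
move=> hi /andP[h1 h2]; rewrite /seg.
rewrite (@eq_in_count _ _ (fun i' => i' < i)); last first.
  move=> i' _; case: (ltnP i' i) => hh.
    by apply: leq_trans h1; apply: segA_mono.
  by rewrite leqNgt; apply/negbTE; rewrite negbK; apply: leq_trans h2 _; apply: segA_mono.
have -> : iota 0 k = iota 0 i ++ iota i (k - i).
  by rewrite -{1}(subnKC (ltnW hi)) iotaD.
rewrite count_cat (@eq_in_count _ _ predT) ?count_predT ?size_iota; last first.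
  by move=> x; rewrite mem_iota.
rewrite (@eq_in_count _ _ pred0) ?count_pred0 ?addn0 //.
by move=> x; rewrite mem_iota => /andP[hx _]; rewrite /= ltnNge hx.
Qed.

Lemma seg_spec l : l < N -> seg a l < k /\ segA a (seg a l) <= l < segA a (seg a l).+1.
Proof.
move=> hl.
pose i := find (fun i => l < segA a i.+1) (iota 0 k).
have hk : k > 0.
  by case: a hl => //=.
have hhas : has (fun i => l < segA a i.+1) (iota 0 k).
  apply/hasP; exists k.-1; first by rewrite mem_iota add0n prednK ?leqnn.
  by rewrite prednK // segAk.
have hi : i < k by have := hhas; rewrite has_find size_iota.
have hlt : l < segA a i.+1.
  by have := nth_find 0 hhas; rewrite nth_iota // add0n.
have hge : segA a i <= l.
  case ei : i => [|i']; first by rewrite segA0.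
  have hi' : i' < i by rewrite ei.
  have := before_find 0 hi'; rewrite nth_iota ?add0n; last by apply: ltn_trans hi' hi.
  by move/negbT; rewrite -leqNgt.
have e : seg a l = i by apply: seg_eq => //; rewrite hge hlt.
by rewrite e hi hge hlt.
Qed.

Lemma seg_add i m : i < k -> m < nth 0 a i -> seg a (segA a i + m) = i.
Proof. by move=> hi hm; apply: seg_eq => //; rewrite segAS // leq_addr ltn_add2l. Qed.

Lemma offset_add i m : i < k -> m < nth 0 a i -> offset a (segA a i + m) = m.
Proof. by move=> hi hm; rewrite /offset seg_add // addKn. Qed.

End Seg.

Section Deck.
Variable n : nat.
Implicit Types (s : seq {perm 'I_n}).

Lemma deck_after0 s : deck_after s 0 = 1%g.
Proof. by rewrite /deck_after take0. Qed.

Lemma foldr_deck_rcons (l : seq {perm 'I_n}) x :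
  foldr (@deck_mul n) 1%g (rcons l x) = (x * foldr (@deck_mul n) 1%g l)%g.
Proof.
elim: l => [|y l IH] /=; first by rewrite /deck_mul mulg1 mul1g.
by rewrite IH /deck_mul mulgA.
Qed.

Lemma deck_afterS s i : i < size s -> deck_after s i.+1 = (nth 1%g s i * deck_after s i)%g.
Proof. by move=> h; rewrite /deck_after (take_nth 1%g h) foldr_deck_rcons. Qed.

Variable a : seq nat.
Hypothesis ha : forall x, x \in a -> 1 <= x <= n.

Lemma nth_a_le i : i < size a -> nth 0 a i <= n.
Proof. by move=> h; have /andP[] := ha (mem_nth 0 h). Qed.

Lemma offset_lt l : l < sumn a -> offset a l < nth 0 a (seg a l).
Proof.
move=> hl; have [hs /andP[h1 h2]] := seg_spec hl.
rewrite /offset ltn_subLR // -segAS //.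
Qed.

Lemma offset_ltn l : l < sumn a -> offset a l < n.
Proof.
move=> hl; apply: leq_trans (offset_lt hl) _; apply: nth_a_le; by case: (seg_spec hl).
Qed.

Lemma hit_card_spec s l (p : 'I_n) : l < sumn a -> val p = offset a l ->
  hit_card a s l = Some (deck_after s (seg a l) p).
Proof.
move=> hl hp; rewrite /hit_card.
have -> : insub (offset a l) = Some p.
  by rewrite -hp; apply: valK.
by [].
Qed.

End Deck.

Section Key.
Variables (n : nat) (a : seq nat).
Hypothesis ha : forall x, x \in a -> 1 <= x <= n.
Local Notation k := (size a).
Local Notation N := (sumn a).
Local Notation A := (segA a).
Variable tinv : 'I_n -> nat.
Variable H : nat -> 'I_n -> bool.
Hypothesis Htot : forall l, l < N -> exists c, H l c.
Hypothesis Huniq : forall l c c', l < N -> H l c -> H l c' -> c = c'.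
Hypothesis Hseg : forall l l' c, l < N -> l' < N -> seg a l = seg a l' ->
  H l c -> H l' c -> l = l'.

Definition key b c := if first N (H^~ c) b < N then first N (H^~ c) b else N + tinv c.

Lemma key_ge b c : b <= N -> b <= key b c.
Proof.
move=> hb; rewrite /key; case: ifP => _; first exact: first_ge.
exact: leq_trans hb (leq_addr _ _).
Qed.

Lemma keyN c : key N c = N + tinv c.
Proof. by rewrite /key /first subnn /= addn0 ltnn. Qed.

Lemma ai_lt i m : i < k -> m < nth 0 a i -> A i + m < N.
Proof.
move=> hi hm; apply: leq_trans (segA_leN a i.+1); by rewrite segAS // ltn_add2l.
Qed.

Lemma key_hit i m c : i < k -> m < nth 0 a i -> H (A i + m) c -> key (A i) c = A i + m.
Proof.
move=> hi hm hH; have hN := ai_lt hi hm.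
rewrite /key (@first_eq _ _ _ (A i + m)) ?hN ?leq_addr //.
move=> l' /andP[h1 h2]; apply/negP=> hl'.
have hl'N : l' < N by apply: ltn_trans h2 hN.
have e : seg a l' = seg a (A i + m).
  rewrite seg_add // (@seg_eq _ i) // h1 /= segAS //; apply: ltn_trans h2 _.
  by rewrite ltn_add2l.
by have := Hseg hl'N hN e hl' hH => eq; rewrite eq ltnn in h2.
Qed.

Lemma key_shift i c : i < k -> (forall m, m < nth 0 a i -> ~~ H (A i + m) c) ->
  key (A i) c = key (A i.+1) c.
Proof.
move=> hi hn; rewrite /key (@first_shift _ _ _ (A i.+1)) ?segA_leN ?segA_le1 //.
move=> l /andP[h1 h2]; rewrite -(subnKC h1); apply: hn.
by rewrite ltn_subLR // -segAS.
Qed.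

Lemma key_lt_seg i c : i < k -> key (A i) c < A i.+1 ->
  exists2 m, m < nth 0 a i & H (A i + m) c /\ key (A i) c = A i + m.
Proof.
move=> hi; rewrite /key; case: ifP => hf; last first.
  by move=> h; have := leq_trans h (segA_leN a i.+1); rewrite ltnNge leq_addr.
move=> h; exists (first N (H^~ c) (A i) - A i).
  by rewrite ltn_subLR ?first_ge // -segAS.
by rewrite subnKC ?first_ge //; split => //; apply: (first_hit hf).
Qed.

Hypothesis tinv_inj : injective tinv.

Lemma key_inj b : injective (key b).
Proof.
move=> c c'; rewrite /key.
case: ifP => h; case: ifP => h' e.
- by apply: (Huniq h (first_hit h)); rewrite e; exact: (first_hit h').
- by move: h; rewrite e ltnNge leq_addr.
- by move: h'; rewrite -e ltnNge leq_addr.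
- by apply: tinv_inj; apply/eqP; rewrite -(eqn_add2l N) e.
Qed.

End Key.

Section Key2.
Variables (n : nat) (a : seq nat).
Hypothesis ha : forall x, x \in a -> 1 <= x <= n.
Local Notation k := (size a).
Local Notation N := (sumn a).
Local Notation A := (segA a).
Variable tinv : 'I_n -> nat.
Variable H : nat -> 'I_n -> bool.
Hypothesis Htot : forall l, l < N -> exists c, H l c.
Hypothesis Huniq : forall l c c', l < N -> H l c -> H l c' -> c = c'.
Hypothesis Hseg : forall l l' c, l < N -> l' < N -> seg a l = seg a l' ->
  H l c -> H l' c -> l = l'.
Local Notation key := (key a tinv H).

Lemma step i (pi pi' : {perm 'I_n}) : i < k -> ordered pi' (key (A i.+1)) ->
  (forall c, pi c < nth 0 a i -> H (A i + pi c) c) ->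
  (forall c c', nth 0 a i <= pi c -> nth 0 a i <= pi c' -> (pi c < pi c') = (pi' c < pi' c')) ->
  ordered pi (key (A i)).
Proof.
move=> hi ho ha' hb.
have c1 c : pi c < nth 0 a i -> key (A i) c = A i + pi c.
  by move=> h; apply: key_hit => //; apply: ha'.
have c2 c : nth 0 a i <= pi c -> key (A i) c = key (A i.+1) c.
  move=> h; apply: key_shift => // m hm; apply/negP => hH.
  have hmn : m < n by apply: leq_trans hm (nth_a_le ha hi).
  pose c0 := ((pi^-1)%g (Ordinal hmn)).
  have hc0 : pi c0 = Ordinal hmn by rewrite permKV.
  have := ha' c0; rewrite hc0 /= => /(_ hm) hH0.
  have e := Huniq (ai_lt hi hm) hH hH0.
  by move: h; rewrite e hc0 /= leqNgt hm.
have c3 c : nth 0 a i <= pi c -> A i.+1 <= key (A i) c.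
  by move=> h; rewrite c2 // key_ge // segA_leN.
move=> c c'.
case: (ltnP (pi c) (nth 0 a i)) => h; case: (ltnP (pi c') (nth 0 a i)) => h'.
- by rewrite (c1 c) // (c1 c') // ltn_add2l.
- rewrite (leq_trans h h') (c1 c) //; symmetry; apply: leq_trans (c3 _ h').
  by rewrite segAS // ltn_add2l.
- rewrite ltnNge (ltnW (leq_trans h' h)) (c1 c') //; symmetry; apply/negbTE.
  rewrite -leqNgt; apply: leq_trans (c3 _ h); rewrite segAS // leq_add2l ltnW //.
- by rewrite hb // ho (c2 c) // (c2 c').
Qed.

Lemma ord_pos i (pi : {perm 'I_n}) : i < k -> ordered pi (key (A i)) ->
  forall m c, m < nth 0 a i -> H (A i + m) c -> val (pi c) = m.
Proof.
move=> hi ho m; elim/ltn_ind: m => m IH c hm hH.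
have hk := key_hit tinv Hseg hi hm hH.
have hmn : m < n by apply: leq_trans hm (nth_a_le ha hi).
apply/eqP; rewrite eqn_leq; apply/andP; split.
  rewrite leqNgt; apply/negP=> hlt.
  pose c1 := ((pi^-1)%g (Ordinal hmn)).
  have hc1 : pi c1 = Ordinal hmn by rewrite permKV.
  have : pi c1 < pi c by rewrite hc1.
  rewrite ho hk => hkc1.
  have [m1 hm1 [hH1 hk1]] : exists2 m1, m1 < nth 0 a i & H (A i + m1) c1 /\ key (A i) c1 = A i + m1.
    apply: key_lt_seg => //; apply: ltn_trans hkc1 _; by rewrite segAS // ltn_add2l.
  have hm1m : m1 < m by rewrite hk1 ltn_add2l in hkc1.
  by have := IH m1 hm1m c1 hm1 hH1; rewrite hc1 /= => e; rewrite e ltnn in hm1m.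
case: m IH hm hH hk hmn => [|m] IH hm hH hk hmn //.
have hm' : m < nth 0 a i by apply: ltnW.
have [c2 hc2] := Htot (ai_lt hi hm').
have e2 := IH m (ltnSn m) c2 hm' hc2.
have hk2 := key_hit tinv Hseg hi hm' hc2.
have : key (A i) c2 < key (A i) c by rewrite hk hk2 ltn_add2l.
by rewrite -ho e2.
Qed.

Lemma ord_a i (pi : {perm 'I_n}) : i < k -> ordered pi (key (A i)) ->
  forall c, pi c < nth 0 a i -> H (A i + pi c) c.
Proof.
move=> hi ho c h.
have [c0 hc0] := Htot (ai_lt hi h).
have e := ord_pos hi ho h hc0.
have e' : c = c0 by apply: (@perm_inj _ pi); apply: val_inj; rewrite e.
by rewrite [X in H _ X]e'.
Qed.

Lemma ord_b i (pi pi' : {perm 'I_n}) : i < k -> ordered pi (key (A i)) ->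
  ordered pi' (key (A i.+1)) ->
  forall c c', nth 0 a i <= pi c -> nth 0 a i <= pi c' -> (pi c < pi c') = (pi' c < pi' c').
Proof.
move=> hi ho ho'.
have e c : nth 0 a i <= pi c -> key (A i) c = key (A i.+1) c.
  move=> h; apply: key_shift => // m hm; apply/negP=> hH.
  by have := ord_pos hi ho hm hH => e; rewrite e leqNgt hm in h.
by move=> c c' h h'; rewrite ho ho' e // e.
Qed.

End Key2.

Section Main.
Variables (n : nat) (a : seq nat).
Hypothesis ha : forall x, x \in a -> 1 <= x <= n.
Local Notation k := (size a).
Local Notation N := (sumn a).
Local Notation A := (segA a).
Variable j : nat.
Hypothesis hjn : j <= n.
Variable t : {perm 'I_n}.
Hypothesis ht : isB j t.

Definition Hs (s : {ffun 'I_k -> {perm 'I_n}}) l c := hit_card a (tuple_seq s) l == Some c.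
Definition tinv (c : 'I_n) : nat := val ((t^-1)%g c).

Lemma tinv_inj : injective tinv.
Proof. by move=> c c' /val_inj /perm_inj. Qed.

Lemma size_ts (s : {ffun 'I_k -> {perm 'I_n}}) : size (tuple_seq s) = k.
Proof. by rewrite /tuple_seq size_tuple card_ord. Qed.

Section S.
Variable s : {ffun 'I_k -> {perm 'I_n}}.

Lemma Hs_tot l : l < N -> exists c, Hs s l c.
Proof.
move=> hl; exists (deck_after (tuple_seq s) (seg a l) (Ordinal (offset_ltn ha hl))).
by rewrite /Hs (@hit_card_spec _ _ _ _ (Ordinal (offset_ltn ha hl)) hl).
Qed.

Lemma Hs_uniq l c c' : l < N -> Hs s l c -> Hs s l c' -> c = c'.
Proof. by rewrite /Hs => _ /eqP -> /eqP []. Qed.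

Lemma Hs_seg l l' c : l < N -> l' < N -> seg a l = seg a l' -> Hs s l c -> Hs s l' c -> l = l'.
Proof.
move=> hl hl' e; rewrite /Hs (@hit_card_spec _ _ _ _ (Ordinal (offset_ltn ha hl)) hl) //.
rewrite (@hit_card_spec _ _ _ _ (Ordinal (offset_ltn ha hl')) hl') // e.
move=> /eqP[<-] /eqP[] /perm_inj [] eo.
have [_ /andP[h1 _]] := seg_spec hl; have [_ /andP[h1' _]] := seg_spec hl'.
by rewrite -(subnK h1) -(subnK h1') -/(offset a l) -/(offset a l') eo e.
Qed.

End S.

Lemma part1 s : s \in Dset n a j t -> phi n a j s \in Qset a j.
Proof.
rewrite inE => /and3P[_ /eqP hc _].
have hlt c (l : 'I_N) : hits s l c -> c < j.
  move=> h; have : c \in cards_hit s by rewrite inE; apply/existsP; exists l.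
  by rewrite hc inE.
have hex (c : 'I_n) : c < j -> exists l : 'I_N, hits s l c.
  move=> h; have : c \in cards_hit s by rewrite hc inE.
  by rewrite inE => /existsP.
have htot (l : 'I_N) : exists c, hits s l c by apply: Hs_tot.
rewrite inE; apply/and3P; split.
- rewrite /partition; apply/and3P; split.
  + apply/eqP/setP=> l; rewrite in_setT; apply/bigcupP.
    have [c hl] := htot l; exists (alpha s c); last by rewrite inE.
    by apply/imsetP; exists c; rewrite // inE (hlt _ _ hl).
  + apply/trivIsetP=> B B' /imsetP[c hc' ->] /imsetP[c' hc'' ->] hne.
    rewrite -setI_eq0; apply/eqP/setP=> l; rewrite !inE; apply/negP=> /andP[h1 h2].
    by move: hne; rewrite (Hs_uniq (ltn_ord l) h1 h2) eqxx.
  + apply/negP=> /imsetP[c]; rewrite inE => /hex [l hl] e.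
    have : l \in alpha s c by rewrite inE.
    by rewrite -e inE.
- rewrite card_in_imset ?card_ltn_ord //.
  move=> c c'; rewrite inE => /hex [l hl] _ e.
  have : l \in alpha s c' by rewrite -e inE.
  by rewrite inE => h; apply: Hs_uniq (ltn_ord l) hl h.
- apply/forallP=> B; apply/implyP=> /imsetP[c _ ->].
  apply/forall_inP=> x; rewrite inE => hx; apply/forall_inP=> y; rewrite inE => hy.
  apply/implyP=> /eqP e; apply/eqP/val_inj.
  exact: Hs_seg (ltn_ord x) (ltn_ord y) e hx hy.
Qed.

Lemma label_uniq (T : finType) (mu : T -> nat) (f g : 'I_n -> T) :
  let J := [set c : 'I_n | c < j] in
  f @: J = g @: J ->
  (forall c c', c \in J -> c' \in J -> (c < c') = (mu (f c) < mu (f c'))) ->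
  (forall c c', c \in J -> c' \in J -> (c < c') = (mu (g c) < mu (g c'))) ->
  forall c, c \in J -> f c = g c.
Proof.
move=> J eimg hf hg.
have cnt (h : 'I_n -> T) : (forall c c', c \in J -> c' \in J -> (c < c') = (mu (h c) < mu (h c'))) ->
    forall c, c \in J -> #|[set B in h @: J | mu B < mu (h c)]| = c.
  move=> hh c hc.
  have hinj : {in J &, injective h}.
    move=> c1 c2 h1 h2 e; apply/val_inj; case: (ltngtP (val c1) (val c2)) => // hlt.
      by have := hh _ _ h1 h2; rewrite hlt e ltnn.
    by have := hh _ _ h2 h1; rewrite hlt e ltnn.
  have -> : [set B in h @: J | mu B < mu (h c)] = h @: [set c' in J | mu (h c') < mu (h c)].
    apply/setP=> B; rewrite inE; apply/andP/imsetP.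
      by move=> [/imsetP[c' hc' ->] hm]; exists c'; rewrite // inE hc' hm.
    by move=> [c' ]; rewrite inE => /andP[hc' hm] ->; split => //; apply: imset_f.
  rewrite card_in_imset; last first.
    move=> x y; rewrite inE => /andP[hx _]; rewrite inE => /andP[hy _]; exact: hinj hx hy.
  rewrite -[X in _ = X](@card_ltn_ord n c) ?(ltnW (ltn_ord c)) //.
  apply: eq_card => c'; rewrite !inE.
  case: (ltnP c' j) => hc' /=; first by rewrite -hh // inE.
  move: hc; rewrite inE => hc; symmetry; apply/negbTE; rewrite -leqNgt.
  by apply: leq_trans (ltnW hc) hc'.
move=> c hc.
have : f c \in g @: J by rewrite -eimg imset_f.
move=> /imsetP[c'' hc'' e].
have e1 := cnt f hf c hc; have e2 := cnt g hg c'' hc''.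
rewrite -e -eimg e1 in e2.
by rewrite e; congr g; apply: val_inj.
Qed.


Definition mu (B : {set 'I_N}) := first N (fun l => [exists x in B, val x == l]) 0.

Lemma nth_ts (s : {ffun 'I_k -> {perm 'I_n}}) (i : 'I_k) : nth 1%g (tuple_seq s) i = s i.
Proof. exact: nth_fgraph_ord. Qed.

Lemma D_ordered s : s \in Dset n a j t -> forall i, i <= k ->
  ordered ((deck_after (tuple_seq s) i)^-1)%g (key a tinv (Hs s) (A i)).
Proof.
rewrite inE => /and3P[/forallP hB _ /eqP hd].
suff h : forall m, m <= k -> ordered ((deck_after (tuple_seq s) (k - m))^-1)%g (key a tinv (Hs s) (A (k - m))).
  by move=> i hi; have := h (k - i) (leq_subr _ _); rewrite subKn.
elim=> [|m IH] hm.
  by rewrite subn0 hd segAk => c c'; rewrite !keyN ltn_add2l.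
have hi : k - m.+1 < k by lia.
have e : (k - m.+1).+1 = k - m by lia.
have ho' := IH (ltnW hm); rewrite -e in ho'.
apply: (step ha (@Hs_uniq s) (@Hs_seg s) hi ho').
  move=> c hc; rewrite /Hs (@hit_card_spec _ _ _ _ ((deck_after (tuple_seq s) (k - m.+1))^-1 c)%g (ai_lt hi hc)).
    by rewrite seg_add // permKV.
  by rewrite offset_add.
move=> c c' h h'.
rewrite deck_afterS ?size_ts // invMg !permM.
rewrite -[k - m.+1]/(nat_of_ord (Ordinal hi)) nth_ts.
have := hB (Ordinal hi); rewrite /isB => /forallP hB2.
set x := ((deck_after _ _)^-1)%g c in h *; set y := ((deck_after _ _)^-1)%g c' in h' *.
set sg := s (Ordinal hi).
case: (ltngtP (val x) (val y)) => hxy.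
- by have := forallP (hB2 x) y; rewrite /= h hxy /= => ->.
- have := forallP (hB2 y) x; rewrite /= h' hxy /= => hh.
  by symmetry; apply/negbTE; rewrite -leqNgt ltnW.
- have -> : x = y by apply: val_inj.
  by rewrite !ltnn.
Qed.

Lemma D_hex s (c : 'I_n) : s \in Dset n a j t -> c < j -> exists l : 'I_N, hits s l c.
Proof.
rewrite inE => /and3P[_ /eqP hc _] h; have : c \in cards_hit s by rewrite hc inE.
by rewrite inE => /existsP.
Qed.

Lemma alpha_out s (c : 'I_n) : s \in Dset n a j t -> j <= c -> alpha s c = set0.
Proof.
rewrite inE => /and3P[_ /eqP hc _] h; apply/setP=> l; rewrite !inE; apply/negP=> hl.
have : c \in cards_hit s by rewrite inE; apply/existsP; exists l.
by rewrite hc inE ltnNge h.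
Qed.

Lemma key0_alpha s (c : 'I_n) : s \in Dset n a j t -> c < j ->
  key a tinv (Hs s) 0 c = mu (alpha s c).
Proof.
move=> hs hc; have [l hl] := D_hex hs hc.
have hf : first N ((Hs s)^~ c) 0 < N.
  by apply: leq_ltn_trans (ltn_ord l); apply: first_le (ltn_ord l) hl.
rewrite /key hf; apply: first_ext => l' /andP[_ hl']; apply/idP/existsP.
  by move=> h; exists (Ordinal hl'); rewrite inE eqxx andbT; exact: h.
by move=> [x /andP[]]; rewrite inE => hx /eqP <-.
Qed.

Lemma part2 : {in Dset n a j t &, injective (phi n a j)}.
Proof.
move=> s s' hs hs' e.
have mono s1 : s1 \in Dset n a j t -> forall c c', c \in [set c : 'I_n | c < j] ->
    c' \in [set c : 'I_n | c < j] -> (c < c') = (mu (alpha s1 c) < mu (alpha s1 c')).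
  move=> h1 c c'; rewrite !inE => hc hc'; rewrite -!key0_alpha //.
  have := D_ordered h1 (leq0n k) c c'.
  by rewrite segA0 /deck_after take0 /= invg1 !perm1 => <-.
have ea c : alpha s c = alpha s' c.
  case: (ltnP c j) => hc; last by rewrite !alpha_out.
  by apply: (label_uniq e (mono _ hs) (mono _ hs')); rewrite inE.
have eH l c : l < N -> Hs s l c = Hs s' l c.
  by move=> hl; have := ea c; move/setP/(_ (Ordinal hl)); rewrite !inE.
have ek b : b <= N -> key a tinv (Hs s) b =1 key a tinv (Hs s') b.
  move=> hb c; rewrite /key (@first_ext _ _ ((Hs s')^~ c)) //.
  by move=> l /andP[_ hl]; apply: eH.
have ed i : i <= k -> deck_after (tuple_seq s) i = deck_after (tuple_seq s') i.
  move=> hi; apply: invg_inj; apply: (ordered_uniq (D_ordered hs hi)).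
  move=> c c'; rewrite (D_ordered hs' hi) -!ek //; exact: segA_leN.
have hsi (s1 : {ffun 'I_k -> {perm 'I_n}}) (i : 'I_k) :
    s1 i = (deck_after (tuple_seq s1) i.+1 * (deck_after (tuple_seq s1) i)^-1)%g.
  by rewrite deck_afterS ?size_ts // mulgK nth_ts.
apply/ffunP=> i; rewrite (hsi s) (hsi s') !ed //; exact: ltnW.
Qed.

Lemma key_nohit (H : nat -> 'I_n -> bool) b c : b <= N -> (forall l, b <= l < N -> ~~ H l c) ->
  key a tinv H b c = N + tinv c.
Proof.
move=> hb hn; rewrite /key; case: ifP => // hf.
by have := hn (first N (H^~ c) b); rewrite first_ge hf (first_hit hf); move/(_ isT).
Qed.

Section Surj.
Variable P : {set {set 'I_N}}.
Hypothesis hP : P \in Qset a j.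

Lemma P_facts : [/\ cover P = setT, trivIset P, set0 \notin P, #|P| = j &
  forall B, B \in P -> forall x y : 'I_N, x \in B -> y \in B -> seg a x = seg a y -> x = y].
Proof.
move: hP; rewrite inE => /and3P[/and3P[/eqP h1 h2 h3] /eqP h4 /forallP h5].
split => // B hB x y hx hy e.
have := h5 B; rewrite hB /= => /forall_inP /(_ x hx) /forall_inP /(_ y hy).
by rewrite e eqxx => /eqP.
Qed.

Lemma P_disj B B' x : B \in P -> B' \in P -> x \in B -> x \in B' -> B = B'.
Proof.
move=> hB hB' hx hx'; case: P_facts => _ htr _ _ _.
apply/eqP; apply/negP=> hne; move/trivIsetP: htr => /(_ B B' hB hB') hd.
have := hd (introN idP hne); rewrite -setI_eq0 => /eqP /setP /(_ x); by rewrite !inE hx hx'.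
Qed.

Lemma mu_spec B : B \in P -> mu B < N /\ [exists x in B, val x == mu B].
Proof.
move=> hB; case: P_facts => _ _ h0 _ _.
have [x hx] : exists x, x \in B.
  case: (set_0Vmem B) => [e|[x hx]]; last by exists x.
  by move: h0; rewrite -e hB.
have hlt : mu B < N.
  apply: leq_ltn_trans (ltn_ord x); apply: first_le (ltn_ord x) _ => //.
  by apply/existsP; exists x; rewrite hx eqxx.
split => //; exact: first_hit hlt.
Qed.

Lemma mu_inj B B' : B \in P -> B' \in P -> mu B = mu B' -> B = B'.
Proof.
move=> hB hB' e.
have [_ /existsP[x /andP[hx /eqP ex]]] := mu_spec hB.
have [_ /existsP[y /andP[hy /eqP ey]]] := mu_spec hB'.
have exy : x = y by apply: val_inj; rewrite ex ey.
by apply: (P_disj hB hB' hx); rewrite exy.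
Qed.

Definition lab B := #|[set B' in P | mu B' < mu B]|.

Lemma lab_lt B : B \in P -> lab B < j.
Proof.
move=> hB; case: P_facts => _ _ _ <- _; apply: proper_card; apply/properP; split.
  by apply/subsetP=> x; rewrite inE => /andP[].
by exists B; rewrite // inE ltnn andbF.
Qed.

Lemma lab_mono B B' : B \in P -> B' \in P -> (lab B < lab B') = (mu B < mu B').
Proof.
move=> hB hB'; case: (ltnP (mu B) (mu B')) => h.
  apply: proper_card; apply/properP; split.
    apply/subsetP=> x; rewrite !inE => /andP[-> hx] /=; exact: ltn_trans hx h.
  by exists B; rewrite !inE ?hB ?h // ltnn andbF.
apply/negbTE; rewrite -leqNgt; apply: subset_leq_card; apply/subsetP=> x.
rewrite !inE => /andP[-> hx] /=; exact: leq_trans hx h.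
Qed.

Lemma lab_inj B B' : B \in P -> B' \in P -> lab B = lab B' -> B = B'.
Proof.
move=> hB hB' e; apply: mu_inj => //.
case: (ltngtP (mu B) (mu B')) => // h.
  by have := lab_mono hB hB'; rewrite h e ltnn.
by have := lab_mono hB' hB; rewrite h e ltnn.
Qed.

Lemma lab_onto (c : 'I_n) : c < j -> exists2 B, B \in P & lab B = c.
Proof.
move=> hc; case: P_facts => _ _ _ hcard _.
pose I := [set insubd c (lab B) | B in P].
have hsub : I \subset [set c' : 'I_n | c' < j].
  apply/subsetP=> x /imsetP[B hB ->]; rewrite inE val_insubd.
  by rewrite (leq_trans (lab_lt hB) hjn) lab_lt.
have hcI : #|I| = #|[set c' : 'I_n | c' < j]|.
  rewrite card_ltn_ord // card_in_imset ?hcard // => B B' hB hB' e.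
  apply: lab_inj => //; move: (congr1 val e); rewrite !val_insubd.
  by rewrite (leq_trans (lab_lt hB) hjn) (leq_trans (lab_lt hB') hjn).
have : c \in I by rewrite (subset_cardP hcI hsub) inE.
move=> /imsetP[B hB e]; exists B => //.
by move: (congr1 val e); rewrite val_insubd (leq_trans (lab_lt hB) hjn).
Qed.



Definition alpha' (c : 'I_n) : {set 'I_N} := odflt set0 [pick B in P | lab B == c].

Lemma alpha'_in (c : 'I_n) : c < j -> alpha' c \in P /\ lab (alpha' c) = c.
Proof.
move=> hc; rewrite /alpha'; case: pickP => [B /andP[hB /eqP e] //|hn].
have [B hB e] := lab_onto hc.
by have := hn B; rewrite hB e eqxx.
Qed.

Lemma alpha'_out (c : 'I_n) : j <= c -> alpha' c = set0.
Proof.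
move=> hc; rewrite /alpha'; case: pickP => [B /andP[hB /eqP e]|//].
by have := lab_lt hB; rewrite e ltnNge hc.
Qed.

Lemma alpha'_onto B : B \in P -> exists2 c : 'I_n, c < j & alpha' c = B.
Proof.
move=> hB; have hl := lab_lt hB.
exists (Ordinal (leq_trans hl hjn)) => //.
have [h1 h2] := alpha'_in (c := Ordinal (leq_trans hl hjn)) hl.
by apply: lab_inj.
Qed.

Definition HP l (c : 'I_n) := [exists x in alpha' c, val x == l].

Lemma HP_lt l (c : 'I_n) : HP l c -> c < j.
Proof.
move=> /existsP[x /andP[hx _]]; rewrite ltnNge; apply/negP=> h.
by move: hx; rewrite alpha'_out // inE.
Qed.

Lemma HP_tot l : l < N -> exists c, HP l c.
Proof.
move=> hl; case: P_facts => hcov _ _ _ _.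
have : Ordinal hl \in cover P by rewrite hcov inE.
move=> /bigcupP[B hB hx]; have [c hc e] := alpha'_onto hB.
by exists c; apply/existsP; exists (Ordinal hl); rewrite e hx eqxx.
Qed.

Lemma HP_uniq l c c' : l < N -> HP l c -> HP l c' -> c = c'.
Proof.
move=> _ h h'; have hc := HP_lt h; have hc' := HP_lt h'.
move: h h' => /existsP[x /andP[hx /eqP ex]] /existsP[y /andP[hy /eqP ey]].
have exy : x = y by apply: val_inj; rewrite ex ey.
have [i1 l1] := alpha'_in hc; have [i2 l2] := alpha'_in hc'.
have e : alpha' c = alpha' c' by apply: (P_disj i1 i2 hx); rewrite exy.
by apply: val_inj; rewrite /= -l1 -l2 e.
Qed.

Lemma HP_seg l l' c : l < N -> l' < N -> seg a l = seg a l' -> HP l c -> HP l' c -> l = l'.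
Proof.
move=> _ _ e h h'; have hc := HP_lt h; have [i1 _] := alpha'_in hc.
move: h h' => /existsP[x /andP[hx /eqP ex]] /existsP[y /andP[hy /eqP ey]].
case: P_facts => _ _ _ _ h5.
by rewrite -ex -ey (h5 _ i1 x y hx hy) // ex ey.
Qed.


Definition K i := key a tinv HP (A i).
Lemma Kinj i : injective (K i).
Proof. exact: (@key_inj _ _ _ _ (@HP_uniq) tinv_inj (A i)). Qed.
Definition pi i := sval (ordered_exists (@Kinj i)).
Lemma ho i : ordered (pi i) (K i).
Proof. exact: (svalP (ordered_exists (@Kinj i))). Qed.
Definition dk i := ((pi i)^-1)%g.
Definition sP : {ffun 'I_k -> {perm 'I_n}} := [ffun i : 'I_k => (dk i.+1 * (dk i)^-1)%g].

Lemma tinv_mono (c c' : 'I_n) : j <= c -> j <= c' -> (c < c') = (tinv c < tinv c').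
Proof.
move: ht; rewrite /isB => /forallP hB hc hc'.
case: (ltngtP (val c) (val c')) => h.
- by have := forallP (hB c) c'; rewrite hc h /= => ->.
- have := forallP (hB c') c; rewrite hc' h /= => hh.
  by symmetry; apply/negbTE; rewrite -leqNgt ltnW.
- have -> : c = c' by apply: val_inj.
  by rewrite !ltnn.
Qed.

Lemma K0_ordered : ordered 1%g (K 0).
Proof.
have kin (c : 'I_n) : c < j -> K 0 c = mu (alpha' c).
  move=> hc; have [hin _] := alpha'_in hc; have [hlt _] := mu_spec hin.
  have e : first N (HP^~ c) 0 = mu (alpha' c) by [].
  by rewrite /K segA0 /key e hlt.
have kout (c : 'I_n) : j <= c -> K 0 c = N + tinv c.
  move=> hc; rewrite /K segA0 key_nohit // => l _; apply/negP=> h.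
  by have := HP_lt h; rewrite ltnNge hc.
move=> c c'; rewrite !perm1.
case: (ltnP c j) => hc; case: (ltnP c' j) => hc'.
- have [i1 l1] := alpha'_in hc; have [i2 l2] := alpha'_in hc'.
  by rewrite (kin c hc) (kin c' hc') -lab_mono // l1 l2.
- rewrite (kin c hc) (kout c' hc') (leq_trans hc hc'); symmetry.
  have [i1 _] := alpha'_in hc; have [hlt _] := mu_spec i1.
  exact: leq_trans hlt (leq_addr _ _).
- rewrite (kout c hc) (kin c' hc') ltnNge (ltnW (leq_trans hc' hc)) /=; symmetry.
  apply/negbTE; rewrite -leqNgt; have [i1 _] := alpha'_in hc'; have [hlt _] := mu_spec i1.
  exact: leq_trans (ltnW hlt) (leq_addr _ _).
- by rewrite (kout c hc) (kout c' hc') ltn_add2l tinv_mono.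
Qed.

Lemma pi0 : pi 0 = 1%g.
Proof. exact: ordered_uniq (ho 0) K0_ordered. Qed.

Lemma pik : pi k = (t^-1)%g.
Proof.
apply: ordered_uniq (ho k) _ => c c'.
by rewrite /K segAk !keyN ltn_add2l.
Qed.

Lemma deck_s i : i <= k -> deck_after (tuple_seq sP) i = dk i.
Proof.
elim: i => [|i IH] hi; first by rewrite deck_after0 /dk pi0 invg1.
rewrite deck_afterS ?size_ts // IH ?(ltnW hi) //.
rewrite -[i]/(nat_of_ord (Ordinal hi)) nth_ts ffunE /=.
by rewrite mulgKV.
Qed.


Lemma s_isB (i : 'I_k) : isB (nth 0 a i) (sP i).
Proof.
rewrite ffunE /isB invMg /dk !invgK.
apply/forallP=> x; apply/forallP=> y; apply/implyP=> /andP[hx hxy].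
rewrite !permM.
have hi : (i : nat) < k := ltn_ord i.
have e := @ord_b _ _ ha _ _ (@HP_tot) (@HP_seg) _ _ _ hi (ho i) (ho i.+1)
   (((pi i)^-1)%g x) (((pi i)^-1)%g y).
by rewrite -e !permKV // (leq_trans hx (ltnW hxy)).
Qed.

Lemma hits_s (l : 'I_N) (c : 'I_n) : hits sP l c = HP l c.
Proof.
have hl := ltn_ord l; have [hs /andP[h1 h2]] := seg_spec hl.
rewrite /hits (@hit_card_spec _ _ _ _ (Ordinal (offset_ltn ha hl)) hl) //.
rewrite deck_s ?(ltnW hs) //.
set c0 := dk _ _.
have hc0 : pi (seg a l) c0 = Ordinal (offset_ltn ha hl) by rewrite /c0 /dk permKV.
have hH : HP l c0.
  have := @ord_a _ _ ha _ _ (@HP_tot) (@HP_seg) _ _ hs (ho (seg a l)) c0.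
  rewrite hc0 /= /offset subnKC //; apply; exact: offset_lt.
apply/eqP/idP=> [[<-] //|h].
by congr Some; apply: (@HP_uniq l) hH h.
Qed.

Lemma part3_main : exists2 s, s \in Dset n a j t & phi n a j s = P.
Proof.
have ea c : alpha sP c = alpha' c.
  apply/setP => l; rewrite inE hits_s; apply/existsP/idP.
    by move=> [x /andP[hx /eqP e]]; have <- : x = l by apply: val_inj.
  by move=> h; exists l; rewrite h eqxx.
exists sP.
  rewrite inE; apply/and3P; split.
  - by apply/forallP=> i; apply: s_isB.
  - apply/eqP/setP=> c; rewrite !inE; apply/existsP/idP.
      by move=> [l]; rewrite hits_s => /HP_lt.
    move=> hc; have [hin _] := alpha'_in hc.
    case: P_facts => _ _ h0 _ _.
    case: (set_0Vmem (alpha' c)) => [e|[x hx]]; first by move: h0; rewrite -e hin.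
    by exists x; rewrite hits_s; apply/existsP; exists x; rewrite hx eqxx.
  - by rewrite deck_s // /dk pik invgK.
apply/setP=> B; apply/imsetP/idP.
  by move=> [c]; rewrite inE => hc ->; rewrite ea; have [] := alpha'_in hc.
move=> hB; have [c hc e] := alpha'_onto hB.
by exists c; rewrite ?inE // ea e.
Qed.

End Surj.

End Main.

Theorem theorem3p2 (n : nat) (a : seq nat)
  (ha : forall x, x \in a -> 1 <= x <= n)
  (j : nat) (hj1 : \max_(x <- a) x <= j) (hj2 : j <= minn (sumn a) n)
  (t : {perm 'I_n}) (ht : isB j t) :
  {in Dset n a j t, forall s, phi n a j s \in Qset a j} /\
  {in Dset n a j t &, injective (phi n a j)} /\
  (forall P, P \in Qset a j -> exists2 s, s \in Dset n a j t & phi n a j s = P).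
Proof.
have hjn : j <= n by move: hj2; rewrite leq_min => /andP[].
split; first by move=> s hs; apply: (part1 ha _ hs).
split; first exact: (part2 ha hjn).
by move=> P hP; apply: (part3_main ha hjn ht hP).
Qed.
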